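(* Let $k\ge1$ be an integer. The set $N^{(-)}_k=\{s\in S(\theta): \lfloor k\theta\rfloor\le s\le k\theta\}$ is invariant under $s\mapsto \lfloor k\theta\rfloor+k\theta-s$, and the set $N^{(+)}_k=\{s\in S(\theta): \lfloor k/\theta\rfloor\theta\le s\le k\}$ is invariant under $s\mapsto \lfloor k/\theta\rfloor\theta+k-s$. Consequently, listing the elements of either set in increasing order, the sequence of consecutive differences is a palindrome.
   Context: Fix an irrational $\theta$ with $1<\theta<2$ and let $S(\theta)=\{i+j\theta : i,j\in\mathbb{N}_0\}$. *)

(* Defs.v *)
From Stdlib Require Import Reals List Sorting.Sorted.
Open Scope R_scope.

Definition irrational (x : R) : Prop :=
  ~ exists p q : Z, q <> 0%Z /\ x = IZR p / IZR q.

(* floor function: Int_part x = up x - 1 is the floor of x. *)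
Definition Rfloor (x : R) : R := IZR (Int_part x).

Definition inS (theta s : R) : Prop :=
  exists i j : nat, s = INR i + INR j * theta.

Definition Nminus (theta : R) (k : nat) (s : R) : Prop :=
  inS theta s /\ Rfloor (INR k * theta) <= s <= INR k * theta.

Definition Nplus (theta : R) (k : nat) (s : R) : Prop :=
  inS theta s /\ Rfloor (INR k / theta) * theta <= s <= INR k.

Fixpoint diffs (l : list R) : list R :=
  match l with
  | x :: ((y :: _) as t) => (y - x) :: diffs t
  | _ => nil
  end.

(* Main.v *)
From Pilot Require Import Defs.
From Stdlib Require Import Reals List Sorting.Sorted Lra Lia ZArith.
Import Pilot.Defs.
Open Scope R_scope.

Lemma floor_ge (n : nat) (x : R) : INR n <= x -> (Z.of_nat n <= Int_part x)%Z.
Proof.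
  intros H. destruct (base_Int_part x) as [Ha Hb].
  destruct (Z_le_gt_dec (Z.of_nat n) (Int_part x)) as [h|h]; auto.
  exfalso. assert (Int_part x + 1 <= Z.of_nat n)%Z as h2 by lia.
  apply IZR_le in h2. rewrite plus_IZR, <- INR_IZR_INZ in h2. lra.
Qed.

Lemma floor_split (n : nat) (x : R) : INR n <= x ->
  exists m : nat, Rfloor x = INR n + INR m.
Proof.
  intros H. pose proof (floor_ge n x H).
  exists (Z.to_nat (Int_part x - Z.of_nat n)).
  unfold Rfloor. rewrite (INR_IZR_INZ (Z.to_nat _)), Z2Nat.id by lia.
  rewrite minus_IZR, <- INR_IZR_INZ. ring.
Qed.

Lemma ss_uniq (l1 l2 : list R) : StronglySorted Rlt l1 -> StronglySorted Rlt l2 ->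
  (forall x, In x l1 <-> In x l2) -> l1 = l2.
Proof.
  revert l2; induction l1 as [|a l1 IH]; intros [|b l2] S1 S2 E.
  - reflexivity.
  - exfalso. apply (proj2 (E b)). left; auto.
  - exfalso. apply (proj1 (E a)). left; auto.
  - apply StronglySorted_inv in S1 as [S1 F1].
    apply StronglySorted_inv in S2 as [S2 F2].
    rewrite Forall_forall in F1, F2.
    assert (a = b).
    { destruct (total_order_T a b) as [[h|h]|h]; auto.
      - exfalso. destruct (proj1 (E a) (or_introl eq_refl)) as [e|i]. lra.
        specialize (F2 a i). lra.
      - exfalso. destruct (proj2 (E b) (or_introl eq_refl)) as [e|i]. lra.
        specialize (F1 b i). lra. }
    subst b. f_equal. apply IH; auto. intros x; split; intros Hx.
    + destruct (proj1 (E x) (or_intror Hx)) as [e|i]; auto.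
      specialize (F1 x Hx). lra.
    + destruct (proj2 (E x) (or_intror Hx)) as [e|i]; auto.
      specialize (F2 x Hx). lra.
Qed.

Lemma ss_app (l : list R) (x : R) : StronglySorted Rlt l ->
  Forall (fun y => y < x) l -> StronglySorted Rlt (l ++ x :: nil).
Proof.
  induction l as [|a l IH]; intros S F; simpl.
  - constructor; constructor.
  - apply StronglySorted_inv in S as [S Fa]. inversion F; subst.
    constructor. apply IH; auto. apply Forall_app; split; auto.
Qed.

Lemma ss_revmap (c : R) (l : list R) : StronglySorted Rlt l ->
  StronglySorted Rlt (rev (map (fun x => c - x) l)).
Proof.
  induction l as [|a l IH]; intros S; simpl.
  - constructor.
  - apply StronglySorted_inv in S as [S Fa]. apply ss_app; auto.
    apply Forall_rev. apply Forall_map. eapply Forall_impl; [|exact Fa].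
    intros y h; simpl; lra.
Qed.

Lemma diffs_snoc (m : list R) (b a : R) :
  diffs ((m ++ b :: nil) ++ a :: nil) = diffs (m ++ b :: nil) ++ (a - b) :: nil.
Proof.
  induction m as [|x m IH]; [reflexivity|].
  destruct m as [|y m]; [reflexivity|].
  change (((x :: y :: m) ++ b :: nil) ++ a :: nil) with
    (x :: y :: ((m ++ b :: nil) ++ a :: nil)).
  change ((x :: y :: m) ++ b :: nil) with (x :: y :: (m ++ b :: nil)).
  change (diffs (x :: y :: ((m ++ b :: nil) ++ a :: nil))) with
    ((y - x) :: diffs (((y :: m) ++ b :: nil) ++ a :: nil)).
  change (diffs (x :: y :: (m ++ b :: nil))) with
    ((y - x) :: diffs ((y :: m) ++ b :: nil)).
  rewrite IH. reflexivity.
Qed.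

Lemma diffs_rev (l : list R) : rev (diffs l) = map Ropp (diffs (rev l)).
Proof.
  induction l as [|a l IH]; [reflexivity|].
  destruct l as [|b t]; [reflexivity|].
  change (diffs (a :: b :: t)) with ((b - a) :: diffs (b :: t)).
  change (rev (a :: b :: t)) with ((rev t ++ b :: nil) ++ a :: nil).
  rewrite diffs_snoc. change (rev ((b - a) :: diffs (b :: t))) with
    (rev (diffs (b :: t)) ++ (b - a) :: nil). rewrite IH.
  change (rev (b :: t)) with (rev t ++ b :: nil).
  rewrite map_app. simpl. do 2 f_equal. ring.
Qed.

Lemma palin (c : R) (l : list R) : StronglySorted Rlt l ->
  (forall s, In s l -> In (c - s) l) -> rev (diffs l) = diffs l.
Proof.
  intros S C.
  assert (E : rev (map (fun x => c - x) l) = l).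
  { apply ss_uniq; auto. apply ss_revmap; auto.
    intros x; rewrite <- in_rev, in_map_iff; split.
    - intros [y [<- Hy]]. auto.
    - intros Hx. exists (c - x); split; [ring|auto]. }
  rewrite <- E at 2.
  assert (D : map Ropp (rev (diffs (map (fun x => c - x) l))) =
              diffs (rev (map (fun x => c - x) l))).
  { rewrite diffs_rev, map_map. etransitivity; [|apply map_id].
    apply map_ext. intros; ring. }
  rewrite <- D.
  assert (M : forall m : list R, diffs (map (fun x => c - x) m) = map Ropp (diffs m)).
  { induction m as [|a m IH]; [reflexivity|]. destruct m as [|b t]; [reflexivity|].
    change (diffs (map (fun x => c - x) (a :: b :: t))) with
      (((c - b) - (c - a)) :: diffs (map (fun x => c - x) (b :: t))).
    rewrite IH. simpl. f_equal. ring. }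
  rewrite M, <- map_rev, map_map. symmetry. etransitivity; [|apply map_id].
  apply map_ext. intros; ring.
Qed.

Theorem lemma9 (theta : R) (Hirr : irrational theta)
  (H1 : 1 < theta) (H2 : theta < 2) (k : nat) (Hk : (1 <= k)%nat) :
  (forall s, Nminus theta k s ->
     Nminus theta k (Rfloor (INR k * theta) + INR k * theta - s)) /\
  (forall s, Nplus theta k s ->
     Nplus theta k (Rfloor (INR k / theta) * theta + INR k - s)) /\
  (forall l : list R, StronglySorted Rlt l ->
     (forall s, In s l <-> Nminus theta k s) -> rev (diffs l) = diffs l) /\
  (forall l : list R, StronglySorted Rlt l ->
     (forall s, In s l <-> Nplus theta k s) -> rev (diffs l) = diffs l).
Proof.
  assert (P1 : forall s, Nminus theta k s ->
     Nminus theta k (Rfloor (INR k * theta) + INR k * theta - s)).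
  { intros s [[i [j ->]] [La Lb]].
    pose proof (pos_INR i) as Pi. pose proof (pos_INR j) as Pj.
    assert (INR i <= INR k * theta) as Hi by nra.
    destruct (floor_split i _ Hi) as [m Hm].
    assert (INR j <= INR k) as Hj by nra. apply INR_le in Hj.
    split; [|lra]. exists m, (k - j)%nat. rewrite minus_INR by auto.
    rewrite Hm. ring. }
  assert (P2 : forall s, Nplus theta k s ->
     Nplus theta k (Rfloor (INR k / theta) * theta + INR k - s)).
  { intros s [[i [j ->]] [La Lb]].
    pose proof (pos_INR i) as Pi. pose proof (pos_INR j) as Pj.
    assert (INR j <= INR k / theta) as Hj.
    { apply Rmult_le_reg_r with theta; [lra|].
      unfold Rdiv. rewrite Rmult_assoc, Rinv_l by lra. lra. }
    destruct (floor_split j _ Hj) as [m Hm].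
    assert (INR i <= INR k) as Hi by nra. apply INR_le in Hi.
    split; [|lra]. exists (k - i)%nat, m. rewrite minus_INR by auto.
    rewrite Hm. ring. }
  split; [exact P1|]. split; [exact P2|]. split.
  - intros l S E. apply (palin (Rfloor (INR k * theta) + INR k * theta)); auto.
    intros s Hs. apply E. apply P1. apply E. auto.
  - intros l S E. apply (palin (Rfloor (INR k / theta) * theta + INR k)); auto.
    intros s Hs. apply E. apply P2. apply E. auto.
Qed.
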